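(* Consider an ontological model with two-element ontic state space $\Lambda=\{0,1\}$. Four preparation procedures $P_T,P_{\tilde T},P_\eta,P_{\tilde\eta}$ are represented by probability distributions (epistemic states) $\mu_T,\mu_{\tilde T},\mu_\eta,\mu_{\tilde\eta}$ on $\Lambda$, and these satisfy the preparation-noncontextuality constraint $$\mu_T(i)+\mu_{\tilde T}(i)=\mu_\eta(i)+\mu_{\tilde\eta}(i)\qquad\text{for all } i\in\Lambda .$$ A binary two-copy comparison measurement $M_{\mathrm{swap}}$ with outcomes pass/fail is represented by the SWAP-like response function $\xi_{\mathrm{pass}}(i,j)$ on pairs of ontic states given by the matrix $$\Xi_q=\begin{pmatrix}1&q\\ q&1\end{pmatrix},\qquad q\in[0,1),$$ i.e. $\xi_{\mathrm{pass}}(i,i)=1$ and $\xi_{\mathrm{pass}}(i,j)=q$ for $i\neq j$. Assume further there is a sharp single-copy binary test $M_T=\{T,\tilde T\}$, represented by a response function $\xi_{T}:\Lambda\to[0,1]$ (with $\xi_{\tilde T}=1-\xi_T$), such that $$p(T|M_T,P_T)=\sum_i \xi_T(i)\mu_T(i)=1,\qquad p(T|M_T,P_{\tilde T})=\sum_i\xi_T(i)\mu_{\tilde T}(i)=0,$$ and let $c:=p(T|M_T,P_\eta)=\sum_i\xi_T(i)\mu_\eta(i)$ be the confusability. Let $\eta_1,\eta_2\ge0$ with $\eta_1+\eta_2=1$ be given priors. Define $$p_{\mathrm{pur}}=\sum_{i,j}\xi_{\mathrm{pass}}(i,j)\mu_T(i)\mu_T(j),\qquad p_{\mathrm{mix}}^{(p)}=\sum_{i,j}\xi_{\mathrm{pass}}(i,j)\mu_T(i)\mu^{(p)}_\eta(j),$$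 where for $p\in S_2$ (identity or swap), $\mu_\eta^{(\mathrm{id})}=\mu_\eta$ and $\mu_\eta^{(\mathrm{swap})}(i)=\mu_\eta(1-i)$, and define the operational discriminability score $$D_{\mathrm{op}}=\max_{p\in S_2}\Big[(2p_{\mathrm{mix}}^{(p)}-1)+2\sqrt{\eta_1\eta_2(1-p_{\mathrm{pur}})}\Big].$$ Then $$D_{\mathrm{op}}\le 1-2(1-q)\min\{c,1-c\}.$$ In particular, after relabeling so that $c\le\tfrac12$, $D_{\mathrm{op}}\le 1-2(1-q)c$.
   Context: In an ontological model each preparation $P$ is represented by a probability distribution $\mu_P$ on the ontic space $\Lambda$, each measurement outcome $k$ of a measurement $M$ by a response function $\xi_{k|M}(\lambda)\in[0,1]$ with $\sum_k\xi_{k|M}=1$, and operational probabilities are $p(k|M,P)=\sum_\lambda\xi_{k|M}(\lambda)\mu_P(\lambda)$. For two-copy measurements on independently prepared systems the pass probability is $\sum_{i,j}\xi_{\mathrm{pass}}(i,j)\mu_P(i)\mu_{P'}(j)$. The constraint $\mu_T+\mu_{\tilde T}=\mu_\eta+\mu_{\tilde\eta}$ expresses preparation noncontextuality applied to the operational equivalence $\tfrac12P_T+\tfrac12P_{\tilde T}\simeq\tfrac12P_\eta+\tfrac12P_{\tilde\eta}$ of 50–50 mixtures. *)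

(* Defs.v *)
From HB Require Import structures.
From mathcomp Require Import all_boot all_order all_algebra.
Set Implicit Arguments. Unset Strict Implicit. Unset Printing Implicit Defensive.
Import Order.TTheory GRing.Theory Num.Theory.
Local Open Scope ring_scope.

(* Ontic state space Lambda = {0,1} is 'I_2. *)

Definition is_distr (R : realFieldType) (mu : 'I_2 -> R) : Prop :=
  (forall i, 0 <= mu i) /\ \sum_(i < 2) mu i = 1.

Definition is_response (R : realFieldType) (xi : 'I_2 -> R) : Prop :=
  forall i, 0 <= xi i <= 1.

Definition xi_pass (R : realFieldType) (q : R) (i j : 'I_2) : R :=
  if i == j then 1 else q.

Definition prob1 (R : realFieldType) (xi mu : 'I_2 -> R) : R :=
  \sum_(i < 2) xi i * mu i.

Definition prob_pass (R : realFieldType) (q : R) (mu mu' : 'I_2 -> R) : R :=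
  \sum_(i < 2) \sum_(j < 2) xi_pass q i j * mu i * mu' j.

(* Relabeling of ontic states by p in S_2: identity or swap (i |-> 1 - i). *)
Definition relabel (R : realFieldType) (swap : bool) (mu : 'I_2 -> R) : 'I_2 -> R :=
  fun i => if swap then mu (rev_ord i) else mu i.

Definition p_pur (R : realFieldType) (q : R) (muT : 'I_2 -> R) : R :=
  prob_pass q muT muT.

Definition p_mix (R : realFieldType) (q : R) (swap : bool) (muT mueta : 'I_2 -> R) : R :=
  prob_pass q muT (relabel swap mueta).

Definition D_op (R : rcfType) (q eta1 eta2 : R) (muT mueta : 'I_2 -> R) : R :=
  let score (swap : bool) :=
    (2 * p_mix q swap muT mueta - 1) + 2 * Num.sqrt (eta1 * eta2 * (1 - p_pur q muT)) in
  Num.max (score false) (score true).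

(* Main.v *)
Require Import Defs.
From HB Require Import structures.
From mathcomp Require Import all_boot all_order all_algebra.
From mathcomp Require Import lra.
Import Order.TTheory GRing.Theory Num.Theory.
Local Open Scope ring_scope.

Theorem theorem1 (R : rcfType)
    (muT muTt mueta muetat xiT : 'I_2 -> R) (q eta1 eta2 : R)
    (hT : is_distr muT) (hTt : is_distr muTt)
    (heta : is_distr mueta) (hetat : is_distr muetat)
    (hPNC : forall i, muT i + muTt i = mueta i + muetat i)
    (hq : 0 <= q < 1)
    (hxi : is_response xiT)
    (hsharp1 : prob1 xiT muT = 1) (hsharp0 : prob1 xiT muTt = 0)
    (heta1 : 0 <= eta1) (heta2 : 0 <= eta2) (heta12 : eta1 + eta2 = 1) :
  let c := prob1 xiT mueta in
  D_op q eta1 eta2 muT mueta <= 1 - 2 * (1 - q) * Num.min c (1 - c).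
Proof.
move: hT hTt heta hetat hPNC hq hxi hsharp1 hsharp0 heta1 heta2 heta12.
move=> [hT0 hT] [hTt0 hTt] [he0 he] _ hPNC /andP[q0 q1] hxi h1 h0 _ _ _; cbv zeta.
have r0 : rev_ord (ord0 : 'I_2) = ord_max by apply/val_inj.
have r1 : rev_ord (ord_max : 'I_2) = ord0 by apply/val_inj.
have l1 : lift ord0 ord0 = ord_max :> 'I_2 by apply/val_inj.
move: hT hTt he h1 h0 (hT0 ord0) (hT0 ord_max) (hTt0 ord0) (hTt0 ord_max) (he0 ord0) (he0 ord_max) (hxi ord0) (hxi ord_max).
rewrite /D_op /p_mix /p_pur /prob_pass /prob1 /relabel /xi_pass /=.
have w : widen_ord (leqnSn 1) ord_max = ord0 :> 'I_2 by apply/val_inj.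
rewrite !big_ord_recr !big_ord0 /= !add0r !w r0 r1 !mul1r.
move: (muT ord0) (muT ord_max) (muTt ord0) (muTt ord_max) (mueta ord0) (mueta ord_max) (xiT ord0) (xiT ord_max) => a a' b b' e e' x x'.
move=> ha hb he1 h1 h0 a0 a'0 b0 b'0 e0 e'0 /andP[x0 x1] /andP[x'0 x'1].
have ea' : a' = 1 - a by lra.
have eb' : b' = 1 - b by lra.
have ee' : e' = 1 - e by lra.
rewrite ea' ee'; rewrite eb' ea' in h1 h0.
have p1 : (1 - x) * a = 0 by nra.
have p2 : (1 - x') * (1 - a) = 0 by nra.
have p3 : x * b = 0 by nra.
have p4 : x' * (1 - b) = 0 by nra.
have [[Ea Ex']|[Ea [Ex Ex']]] : (a = 0 /\ x' = 1) \/ (a = 1 /\ x = 1 /\ x' = 0).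
  have [a00|an0] := eqVneq a 0.
    by left; split=> //; move: p2; rewrite a00 subr0 mulr1 => /eqP; rewrite subr_eq0 => /eqP.
  have ex : x = 1 by move/eqP: p1; rewrite mulf_eq0 (negbTE an0) orbF subr_eq0 => /eqP.
  have eb : b = 0 by move/eqP: p3; rewrite ex mul1r => /eqP.
  move: p4; rewrite eb subr0 mulr1 => ex'.
  right; split; last by [].
  move: p2; rewrite ex' subr0 mul1r => /eqP; rewrite subr_eq0 => /eqP <-.
  done.
- have Ex : x = 0 by nra.
  rewrite Ea Ex Ex' !(mul0r, mulr0, mul1r, mulr1, subr0, add0r, addr0, subrr) sqrtr0 !mulr0 !addr0.
  rewrite /Num.max /Num.min /Order.max /Order.min; (case: ifPn => [h|]; last rewrite -leNgt => h); (case: ifPn => [h'|]; last rewrite -leNgt => h'); nra.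
- rewrite Ea Ex Ex' !(mul0r, mulr0, mul1r, mulr1, subr0, add0r, addr0, subrr) sqrtr0 !mulr0 !addr0.
  rewrite /Num.max /Num.min /Order.max /Order.min; (case: ifPn => [h|]; last rewrite -leNgt => h); (case: ifPn => [h'|]; last rewrite -leNgt => h'); nra.

Qed.
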